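(* Let $n\geq 1$ and let $A\in \mathcal{M}_{n}(\mathbb{Z})$ with $\det(A)\neq 0$. Let $\Lambda=\{Az : z\in\mathbb{Z}^n\}$ be the lattice generated by the columns of $A$, let $\mathcal{P}_A=\{Ay : y\in[0,1)^n\}$ be its fundamental parallelepiped, and let $\mathcal{F}_A$ be the set of $A$-feasible lattice vectors. If $\lambda = Az\in\mathcal{F}_A$ with $z\in\mathbb{Z}^n$, then $$\|z\|\leq \left(\frac{\kappa(A)}{2}+1\right)\sqrt{n}.$$
   Context: $\|\cdot\|$ denotes the Euclidean norm on $\mathbb{R}^n$, and $d(x,y)=\|x-y\|$. For a subset $\Lambda\subseteq\mathbb{R}^n$, $d(x,\Lambda)=\min_{\lambda\in\Lambda}d(x,\lambda)$. For a matrix $M$, $\|M\|=\max_{\|y\|=1}\|My\|$ is the spectral norm, and for invertible $M$ the condition number is $\kappa(M)=\|M\|\cdot\|M^{-1}\|$. A lattice vector $\lambda\in\Lambda$ is called $A$-feasible if there exists $x\in\mathcal{P}_A$ with $d(\lambda,x)=d(x,\Lambda)$; $\mathcal{F}_A$ denotes the set of $A$-feasible lattice vectors. *)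

(* Defs.v *)
From HB Require Import structures.
From mathcomp Require Import all_boot all_order all_algebra.
From mathcomp Require Import all_classical all_reals.
Set Implicit Arguments. Unset Strict Implicit. Unset Printing Implicit Defensive.
Import Order.TTheory GRing.Theory Num.Theory.
Local Open Scope ring_scope.
Local Open Scope classical_set_scope.

Section Defs.
Variable R : realType.

Definition enorm n (v : 'cV[R]_n) : R := Num.sqrt (\sum_(i < n) v i 0 ^+ 2).

Definition edist n (x y : 'cV[R]_n) : R := enorm (x - y).

Definition specnorm n (M : 'M[R]_n) : R :=
  sup [set enorm (M *m y) | y in [set y : 'cV[R]_n | enorm y = 1]].

Definition cond_number n (M : 'M[R]_n) : R := specnorm M * specnorm (invmx M).

Definition intmx m p (A : 'M[int]_(m, p)) : 'M[R]_(m, p) := map_mx intr A.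

Definition lattice n (A : 'M[int]_n) : set 'cV[R]_n :=
  [set intmx A *m intmx z | z in [set: 'cV[int]_n]].

Definition fund_par n (A : 'M[int]_n) : set 'cV[R]_n :=
  [set intmx A *m y | y in [set y : 'cV[R]_n | forall i, 0 <= y i 0 < 1]].

Definition dist_set n (x : 'cV[R]_n) (L : set 'cV[R]_n) : R :=
  inf [set edist x l | l in L].

Definition feasible n (A : 'M[int]_n) : set 'cV[R]_n :=
  [set l | lattice A l /\
           exists2 x, fund_par A x & edist l x = dist_set x (lattice A)].

End Defs.

(* Main.v *)
Require Import Defs.
From HB Require Import structures.
From mathcomp Require Import all_boot all_order all_algebra.
From mathcomp Require Import all_classical all_reals.
From mathcomp Require Import ring lra.
Import Order.TTheory GRing.Theory Num.Theory.
Local Open Scope ring_scope.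

Section Helpers.
Variable R : realType.
Local Open Scope classical_set_scope.

Lemma cs_sum n (a b : 'I_n -> R) :
  (\sum_i a i * b i) ^+ 2 <= (\sum_i a i ^+ 2) * (\sum_i b i ^+ 2).
Proof.
set A := \sum_i a i ^+ 2; set B := \sum_i b i ^+ 2; set C := \sum_i a i * b i.
have B0 : 0 <= B by apply: sumr_ge0 => i _; exact: sqr_ge0.
have A0 : 0 <= A by apply: sumr_ge0 => i _; exact: sqr_ge0.
case: (eqVneq B 0) => [Bz|Bnz].
  have bz : forall i, b i = 0.
    move=> i; apply/eqP; rewrite -sqrf_eq0; apply/eqP.
    exact: (psumr_eq0P (fun i _ => sqr_ge0 (b i)) Bz).
  have -> : C = 0 by rewrite /C big1 // => i _; rewrite bz mulr0.
  by rewrite Bz expr0n /= mulr0.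
have Bp : 0 < B by rewrite lt_def Bnz B0.
have H : 0 <= \sum_i (B * a i - C * b i) ^+ 2 by apply: sumr_ge0 => i _; exact: sqr_ge0.
have E : \sum_i (B * a i - C * b i) ^+ 2 = B * (A * B - C ^+ 2).
  transitivity (\sum_i (B ^+ 2 * a i ^+ 2 - 2 * B * C * (a i * b i) + C ^+ 2 * b i ^+ 2)).
    by apply: eq_bigr => i _; ring.
  rewrite !big_split /= sumrN -!mulr_sumr -/A -/B -/C; ring.
by move: H; rewrite E pmulr_rge0 // subr_ge0 mulrC.
Qed.

Lemma enorm_ge0 n (v : 'cV[R]_n) : 0 <= enorm v.
Proof. exact: sqrtr_ge0. Qed.

Lemma sumsq_ge0 n (v : 'cV[R]_n) : 0 <= \sum_i v i 0 ^+ 2.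
Proof. by apply: sumr_ge0 => i _; exact: sqr_ge0. Qed.

Lemma enorm_triangle n (u v : 'cV[R]_n) : enorm (u + v) <= enorm u + enorm v.
Proof.
rewrite /enorm.
set a := \sum_i u i 0 ^+ 2; set b := \sum_i v i 0 ^+ 2.
have a0 : 0 <= a by exact: sumsq_ge0.
have b0 : 0 <= b by exact: sumsq_ge0.
rewrite -[X in _ <= X]ger0_norm ?addr_ge0 ?sqrtr_ge0 // -sqrtr_sqr.
rewrite ler_sqrt ?sqr_ge0 //.
have -> : \sum_i (u + v) i 0 ^+ 2 = a + 2 * (\sum_i u i 0 * v i 0) + b.
  transitivity (\sum_i (u i 0 ^+ 2 + 2 * (u i 0 * v i 0) + v i 0 ^+ 2)).
    by apply: eq_bigr => i _; rewrite mxE; ring.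
  by rewrite !big_split /= -mulr_sumr.
have -> : (Num.sqrt a + Num.sqrt b) ^+ 2 = a + 2 * (Num.sqrt a * Num.sqrt b) + b.
  by rewrite sqrrD !sqr_sqrtr //; ring.
rewrite lerD2r lerD2l ler_pM2l //.
rewrite -sqrtrM //.
apply: le_trans (real_ler_norm _) _; first exact: num_real.
rewrite -sqrtr_sqr ler_sqrt ?mulr_ge0 //; exact: cs_sum.
Qed.

Lemma enormZ n c (v : 'cV[R]_n) : enorm (c *: v) = `|c| * enorm v.
Proof.
rewrite /enorm -sqrtr_sqr -sqrtrM ?sqr_ge0 // mulr_sumr; congr Num.sqrt.
by apply: eq_bigr => i _; rewrite mxE exprMn.
Qed.

Lemma enorm_eq0 n (v : 'cV[R]_n) : enorm v = 0 -> v = 0.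
Proof.
move=> /eqP; rewrite /enorm sqrtr_eq0 => H.
have Hs : \sum_i v i 0 ^+ 2 = 0 by apply/eqP; rewrite eq_le H sumsq_ge0.
apply/matrixP => i j; rewrite !mxE (ord1 j).
apply/eqP; rewrite -sqrf_eq0; apply/eqP.
exact: (psumr_eq0P (fun i _ => sqr_ge0 (v i 0)) Hs).
Qed.

Lemma enorm_bound n (v : 'cV[R]_n) c : 0 <= c -> (forall i, `|v i 0| <= c) ->
  enorm v <= c * Num.sqrt n%:R.
Proof.
move=> c0 H; rewrite /enorm -(ger0_norm c0) -sqrtr_sqr -sqrtrM ?sqr_ge0 //.
rewrite ler_sqrt ?mulr_ge0 ?sqr_ge0 //.
have -> : c ^+ 2 * n%:R = \sum_(i < n) c ^+ 2 by rewrite sumr_const card_ord mulr_natr.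
apply: ler_sum => i _; rewrite -real_normK ?num_real // !expr2.
by apply: ler_pM => //; rewrite normr_ge0.
Qed.


Lemma mx_bound n (M : 'M[R]_n) (y : 'cV[R]_n) :
  enorm (M *m y) <= Num.sqrt (\sum_i \sum_j M i j ^+ 2) * enorm y.
Proof.
rewrite /enorm -sqrtrM; last by apply: sumr_ge0 => i _; apply: sumr_ge0 => j _; exact: sqr_ge0.
rewrite ler_sqrt; last by apply: mulr_ge0; [apply: sumr_ge0 => i _; apply: sumr_ge0 => j _; exact: sqr_ge0|exact: sumsq_ge0].
rewrite mulr_suml; apply: ler_sum => i _; rewrite mxE.
have := @cs_sum _ (fun j => M i j) (fun j => y j 0); rewrite /=; exact.
Qed.

Lemma normalize n (y : 'cV[R]_n) : enorm y != 0 -> enorm ((enorm y)^-1 *: y) = 1.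
Proof.
move=> H; rewrite enormZ ger0_norm ?invr_ge0 ?enorm_ge0 // mulVf //.
Qed.

Lemma specnorm_le n (M : 'M[R]_n) (y : 'cV[R]_n) :
  enorm (M *m y) <= specnorm M * enorm y.
Proof.
case: (eqVneq (enorm y) 0) => [/enorm_eq0 -> | Hy].
  by rewrite mulmx0 /enorm big1 ?sqrtr0 ?mulr0 // => i _; rewrite mxE expr0n.
set r := enorm y.
have rp : 0 < r by rewrite lt_def Hy enorm_ge0.
have Hu := @normalize _ y Hy.
set E := [set enorm (M *m y) | y in [set y : 'cV[R]_n | enorm y = 1]].
have hs : has_sup E.
  split; first by exists (enorm (M *m (r^-1 *: y))); exists (r^-1 *: y).
  exists (Num.sqrt (\sum_i \sum_j M i j ^+ 2)) => _ [u /= Hu1 <-].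
  by apply: le_trans (mx_bound _ M u) _; rewrite Hu1 mulr1.
have := sup_upper_bound hs (ex_intro2 _ _ (r^-1 *: y) Hu erefl).
rewrite -scalemxAr enormZ ger0_norm ?invr_ge0 ?enorm_ge0 // => H.
rewrite -ler_pdivrMr // mulrC; exact: H.
Qed.

Lemma specnorm_ge0 n (M : 'M[R]_n) : (0 < n)%N -> 0 <= specnorm M.
Proof.
move=> n0.
set c : 'cV[R]_n := const_mx 1.
have Hc : enorm c != 0.
  rewrite /enorm sqrtr_eq0 -ltNge (eq_bigr (fun _ => 1)); last by move=> i _; rewrite mxE expr1n.
  by rewrite sumr_const card_ord ltr0n.
have Hu := @normalize _ c Hc.
set E := [set enorm (M *m y) | y in [set y : 'cV[R]_n | enorm y = 1]].
have hs : has_sup E.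
  split; first by exists (enorm (M *m ((enorm c)^-1 *: c))); exists ((enorm c)^-1 *: c).
  exists (Num.sqrt (\sum_i \sum_j M i j ^+ 2)) => _ [u /= Hu1 <-].
  by apply: le_trans (mx_bound _ M u) _; rewrite Hu1 mulr1.
apply: le_trans (enorm_ge0 _ (M *m ((enorm c)^-1 *: c))) _.
exact: (sup_upper_bound hs (ex_intro2 _ _ _ Hu erefl)).
Qed.

End Helpers.

Local Open Scope classical_set_scope.

Theorem lemma2p3 (R : realType) (n : nat) (A : 'M[int]_n) (z : 'cV[int]_n) :
  (0 < n)%N ->
  \det A != 0 ->
  feasible A (intmx R A *m intmx R z) ->
  enorm (intmx R z) <= (cond_number (intmx R A) / 2 + 1) * Num.sqrt (n%:R).
Proof.
move=> n0 dA [_ [x [y Hy <-] Hd]].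
set AR := intmx R A; set zR := intmx R z.
have uA : AR \in unitmx.
  by rewrite unitmxE unitfE /AR /intmx det_map_mx intr_eq0.
set w : 'cV[int]_n := \col_i (if y i 0 < 1/2 then 0 else 1).
have Hw : forall i, `|(y - intmx R w) i 0| <= 1/2.
  move=> i; have := Hy i; rewrite !mxE ler_norml.
  case: ifP => H /andP [H1 H2]; rewrite ?intr0 ?intr1 ?subr0; lra.
have Hd1 : dist_set (AR *m y) (lattice A) <= edist (AR *m y) (AR *m intmx R w).
  apply: ge_inf.
    by exists 0 => _ [l _ <-]; exact: enorm_ge0.
  by exists (AR *m intmx R w) => //; exists w.
have sA0 := specnorm_ge0 _ _ AR n0.
have sI0 := specnorm_ge0 _ _ (invmx AR) n0.
have Hd2 : edist (AR *m y) (AR *m intmx R w) <= specnorm AR * (1/2 * Num.sqrt n%:R).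
  rewrite /edist -mulmxBr; apply: le_trans (specnorm_le _ _ _ _) _.
  apply: ler_wpM2l => //; apply: enorm_bound => //; lra.
have Hz : zR = invmx AR *m (AR *m zR - AR *m y) + y.
  by rewrite mulmxBr !mulKmx // subrK.
have Hy1 : enorm y <= 1 * Num.sqrt n%:R.
  apply: enorm_bound => // i; have := Hy i; rewrite ler_norml => /andP [H1 H2]; lra.
rewrite Hz; apply: le_trans (enorm_triangle _ _ _ _) _.
have H3 : enorm (invmx AR *m (AR *m zR - AR *m y)) <=
    specnorm (invmx AR) * (specnorm AR * (1/2 * Num.sqrt n%:R)).
  apply: le_trans (specnorm_le _ _ _ _) _; apply: ler_wpM2l => //.
  rewrite -/(edist _ _) Hd; exact: le_trans Hd1 Hd2.
rewrite /cond_number -/AR.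
have sq0 : 0 <= Num.sqrt (n%:R : R) := sqrtr_ge0 _.
set a := specnorm AR in H3 *; set b := specnorm (invmx AR) in H3 *.
nra.
Qed.
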